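(* Let $d,k\ge 1$, $0<\alpha<1$, $v>0$, and let $S=\{(\mathbf{x}_1,y_1),\dots,(\mathbf{x}_n,y_n)\}\subseteq \mathcal{X}\times\mathcal{Y}$, where $\mathcal{X}=\{\mathbf{x}\in\mathbb{R}^d:\|\mathbf{x}\|\le 1\}$ and $\mathcal{Y}=\{\pm1\}$, be such that there is $\mathbf{w}^*\in\mathbb{R}^d$ with $y_i\langle \mathbf{w}^*,\mathbf{x}_i\rangle\ge 1$ for all $i$. Consider, as a function of $W\in\mathbb{R}^{2k\times d}$, the loss $$L_S(W)=\frac1n\sum_{i=1}^n \max\{1-y_iN_W(\mathbf{x}_i),0\},\qquad N_W(\mathbf{x})=\mathbf{v}^\top\sigma(W\mathbf{x}),$$ where $\sigma(z)=\max\{\alpha z,z\}$ is applied entrywise and $\mathbf{v}=(v,\dots,v,-v,\dots,-v)\in\mathbb{R}^{2k}$ ($k$ entries equal to $v$ followed by $k$ entries equal to $-v$). Then (1) every critical point of $L_S$ is a global minimum of $L_S$; and (2) $L_S$ is not convex.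
   Context: Gradients are computed with the convention $\sigma'(z)=1$ for $z\ge 0$ and $\sigma'(z)=\alpha$ for $z<0$, and for a single example $(\mathbf{x},y)$ the gradient of $\max\{1-yN_W(\mathbf{x}),0\}$ is taken to be $0$ when $yN_W(\mathbf{x})\ge 1$; when $yN_W(\mathbf{x})<1$ its gradient with respect to the $j$-th row $\mathbf{w}_j$ of $W$ is $-y\,v_j\,\sigma'(\langle \mathbf{w}_j,\mathbf{x}\rangle)\,\mathbf{x}$. The gradient of $L_S$ is the average of these per-example gradients, and a critical point is a $W$ where this gradient is zero. The minimum value of $L_S$ is $0$. *)

(* Defs.v *)
From HB Require Import structures.
From mathcomp Require Import all_boot all_order all_algebra.
Set Implicit Arguments. Unset Strict Implicit. Unset Printing Implicit Defensive.
Import Order.TTheory GRing.Theory Num.Theory.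
Local Open Scope ring_scope.

Section Net.
Variable R : realFieldType.

Definition leaky (alpha z : R) : R := Num.max (alpha * z) z.

Definition leaky' (alpha z : R) : R := if 0 <= z then 1 else alpha.

Definition dotp (d : nat) (u w : 'rV[R]_d) : R := \sum_(l < d) u 0 l * w 0 l.

Definition vvec (k : nat) (v : R) (j : 'I_(k + k)) : R :=
  if (j < k)%N then v else - v.

Definition netN (k d : nat) (alpha v : R) (W : 'M[R]_(k + k, d)) (x : 'rV[R]_d) : R :=
  \sum_(j < k + k) @vvec k v j * leaky alpha (dotp (row j W) x).

Definition lossS (k d n : nat) (alpha v : R) (xs : 'I_n -> 'rV[R]_d) (ys : 'I_n -> R)
    (W : 'M[R]_(k + k, d)) : R :=
  (n%:R)^-1 * \sum_(i < n) Num.max (1 - ys i * netN alpha v W (xs i)) 0.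

Definition grad_example (k d : nat) (alpha v : R) (x : 'rV[R]_d) (y : R)
    (W : 'M[R]_(k + k, d)) : 'M[R]_(k + k, d) :=
  if y * netN alpha v W x < 1 then
    \matrix_(j < k + k, l < d)
       (- y * @vvec k v j * leaky' alpha (dotp (row j W) x) * x 0 l)
  else 0.

Definition gradS (k d n : nat) (alpha v : R) (xs : 'I_n -> 'rV[R]_d) (ys : 'I_n -> R)
    (W : 'M[R]_(k + k, d)) : 'M[R]_(k + k, d) :=
  (n%:R)^-1 *: \sum_(i < n) grad_example alpha v (xs i) (ys i) W.

Definition critical_point (k d n : nat) (alpha v : R) (xs : 'I_n -> 'rV[R]_d)
    (ys : 'I_n -> R) (W : 'M[R]_(k + k, d)) : Prop :=
  gradS alpha v xs ys W = 0.

Definition global_min (m p : nat) (f : 'M[R]_(m, p) -> R) (W : 'M[R]_(m, p)) : Prop :=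
  forall W' : 'M[R]_(m, p), f W <= f W'.

Definition convex_fun (m p : nat) (f : 'M[R]_(m, p) -> R) : Prop :=
  forall (W1 W2 : 'M[R]_(m, p)) (t : R), 0 <= t -> t <= 1 ->
    f (t *: W1 + (1 - t) *: W2) <= t * f W1 + (1 - t) * f W2.

End Net.

(* Main.v *)
Require Import Defs.
From HB Require Import structures.
From mathcomp Require Import all_boot all_order all_algebra.
From mathcomp Require Import ring lra zify.
Import Order.TTheory GRing.Theory Num.Theory.
Local Open Scope ring_scope.
Set Implicit Arguments. Unset Strict Implicit.

Lemma exists_min (R : realFieldType) n (b : 'I_n -> R) : (1 <= n)%N ->
  exists i0, forall i, b i0 <= b i.
Proof.
move=> hn; have i1 : 'I_n by exists 0%N.
case: (arg_minP b (erefl true : (xpredT : {pred 'I_n}) i1)) => i _ h.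
by exists i => j; apply: h.
Qed.

Lemma leakyE (R : realFieldType) (alpha z : R) : 0 <= alpha -> alpha <= 1 ->
  leaky alpha z = if 0 <= z then z else alpha * z.
Proof.
move=> h0 h1; rewrite /leaky; case: ifP => hz.
  apply: max_r; have : 0 <= z * (1 - alpha) by apply: mulr_ge0; lra.
  lra.
apply: max_l; move/negbT: hz; rewrite -ltNge => hz.
have : 0 <= z * (alpha - 1) by apply: mulr_le0; lra.
lra.
Qed.

Definition hh (R : realFieldType) (alpha y s t : R) :=
  y * (leaky alpha (s * y) - leaky alpha (t * y)).

Lemma lpos (R : realFieldType) (alpha z : R) : 0 < alpha -> alpha < 1 -> 0 <= z -> leaky alpha z = z.
Proof. by move=> a0 a1 h; rewrite leakyE; [rewrite h | apply: ltW | apply: ltW]. Qed.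
Lemma lneg (R : realFieldType) (alpha z : R) : 0 < alpha -> alpha < 1 -> z < 0 -> leaky alpha z = alpha * z.
Proof. by move=> a0 a1 h; rewrite leakyE; [rewrite lt_geF | apply: ltW | apply: ltW]. Qed.

Lemma P11 (R : realFieldType) (alpha : R) : 0 < alpha -> alpha < 1 ->
  alpha <= hh alpha 1 (- alpha / 2) (- 1 - alpha / 2).
Proof. move=> a0 a1; rewrite /hh !mulr1 mul1r !lneg //; nra. Qed.
Lemma P12 (R : realFieldType) (alpha : R) : 0 < alpha -> alpha < 1 ->
  alpha <= hh alpha (-1) (- alpha / 2) (- 1 - alpha / 2).
Proof. move=> a0 a1; rewrite /hh !lpos //; nra. Qed.
Lemma P21 (R : realFieldType) (alpha : R) : 0 < alpha -> alpha < 1 ->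
  alpha <= hh alpha 1 (alpha * alpha / 2) (- 1 + alpha / 2).
Proof. move=> a0 a1; rewrite /hh !mulr1 mul1r lpos ?lneg //; nra. Qed.
Lemma P22 (R : realFieldType) (alpha : R) : 0 < alpha -> alpha < 1 ->
  alpha <= hh alpha (-1) (alpha * alpha / 2) (- 1 + alpha / 2).
Proof.
move=> a0 a1; rewrite /hh lneg ?lpos //; try nra.
have : 0 <= (1 - alpha) * (1 - alpha) * (2 + alpha) by rewrite !mulr_ge0 //; lra.
nra.
Qed.
Lemma Pmid1 (R : realFieldType) (alpha : R) : 0 < alpha -> alpha < 1 ->
  hh alpha 1 (1/2 * (- alpha / 2) + (1 - 1/2) * (alpha * alpha / 2))
   (1/2 * (- 1 - alpha / 2) + (1 - 1/2) * (- 1 + alpha / 2)) < alpha.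
Proof.
move=> a0 a1.
have aa2 : alpha * alpha < alpha by nra.
rewrite /hh !mulr1 mul1r lneg ?lneg //; try nra.
Qed.

Lemma hh_mirror (R : realFieldType) (alpha y s t : R) : hh alpha (- y) (- t) (- s) = hh alpha y s t.
Proof. rewrite /hh !mulrNN; ring. Qed.

Lemma Pmid2 (R : realFieldType) (alpha : R) : 0 < alpha -> alpha < 1 ->
  hh alpha (-1) (1/2 * (- (- 1 - alpha / 2)) + (1 - 1/2) * (- (- 1 + alpha / 2)))
   (1/2 * (- (- alpha / 2)) + (1 - 1/2) * (- (alpha * alpha / 2))) < alpha.
Proof.
move=> a0 a1.
rewrite (_ : 1/2 * (- (- 1 - alpha / 2)) + (1 - 1/2) * (- (- 1 + alpha / 2)) =
  - (1/2 * (- 1 - alpha / 2) + (1 - 1/2) * (- 1 + alpha / 2))); last by ring.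
rewrite (_ : 1/2 * (- (- alpha / 2)) + (1 - 1/2) * (- (alpha * alpha / 2)) =
  - (1/2 * (- alpha / 2) + (1 - 1/2) * (alpha * alpha / 2))); last by ring.
by rewrite hh_mirror Pmid1.
Qed.
Lemma leakyZ (R : realFieldType) (alpha x c : R) : 0 <= alpha -> alpha <= 1 -> 0 < c ->
  leaky alpha (x * c) = c * leaky alpha x.
Proof.
move=> h0 h1 hc; rewrite !leakyE // pmulr_lge0 //; case: ifP => _; ring.
Qed.
Definition Wst (R : realFieldType) k d (s t : R) (u : 'rV[R]_d) : 'M[R]_(k+k,d) :=
  \matrix_(j, l) (if (val j == 0)%N then s * u 0 l else if (val j == k)%N then t * u 0 l else 0).

Lemma dotp_Wst (R : realFieldType) k d (s t : R) (u x : 'rV[R]_d) (j : 'I_(k+k)) :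
  dotp (row j (Wst k s t u)) x =
  if (val j == 0)%N then s * dotp u x else if (val j == k)%N then t * dotp u x else 0.
Proof.
rewrite /dotp.
have E l : row j (Wst k s t u) 0 l =
    (if (val j == 0)%N then s else if (val j == k)%N then t else 0) * u 0 l.
  by rewrite !mxE; case: ifP => _; [|case: ifP => _]; rewrite ?mul0r.
under eq_bigr do rewrite E -mulrA.
by rewrite -mulr_sumr /=; case: ifP => _; [|case: ifP => _]; rewrite ?mul0r.
Qed.

Lemma Wst_comb (R : realFieldType) k d (a b s1 t1 s2 t2 : R) (u : 'rV[R]_d) :
  a *: Wst k s1 t1 u + b *: Wst k s2 t2 u = Wst k (a * s1 + b * s2) (a * t1 + b * t2) u.
Proof.
apply/matrixP => j l; rewrite !mxE.
case: ifP => _; first ring. case: ifP => _; first ring. ring.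
Qed.

Lemma netN_Wst (R : realFieldType) k d (alpha v s t : R) (u x : 'rV[R]_d) : (1 <= k)%N ->
  netN alpha v (Wst k s t u) x =
  v * leaky alpha (s * dotp u x) - v * leaky alpha (t * dotp u x).
Proof.
move=> hk.
have h0 : (0 < k + k)%N by lia.
have h1 : (k < k + k)%N by lia.
rewrite /netN (bigD1 (Ordinal h0)) //= (bigD1 (Ordinal h1)) //=; last first.
  by apply/eqP => /(congr1 val) /=; lia.
rewrite big1 ?addr0; last first.
  move=> j /andP[hj1 hj2]; rewrite dotp_Wst.
  have -> : (val j == 0)%N = false by apply/negbTE; apply: contra hj1 => /eqP hj; apply/eqP/val_inj.
  have -> : (val j == k)%N = false by apply/negbTE; apply: contra hj2 => /eqP hj; apply/eqP/val_inj.
  by rewrite /leaky !mulr0 maxxx mulr0.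
rewrite !dotp_Wst /= eqxx.
have -> : (k == 0)%N = false by apply/negbTE; rewrite -lt0n.
rewrite ?eqxx /vvec /= ?hk ?ltnn; ring.
Qed.
Ltac nz := rewrite ?mulf_neq0 ?invr_neq0 //; try (apply/and3P; split; done); try (apply/andP; split; done).

Section L.
Variable R : realFieldType.
Variables (k d n : nat) (alpha v : R) (xs : 'I_n -> 'rV[R]_d) (ys : 'I_n -> R).

Lemma lossS_ge0 (W : 'M[R]_(k + k, d)) : 0 <= lossS alpha v xs ys W.
Proof.
rewrite /lossS mulr_ge0 ?invr_ge0 ?ler0n // sumr_ge0 // => i _.
by rewrite le_max lexx orbT.
Qed.

Lemma lossS_zero (W : 'M[R]_(k + k, d)) : (forall i, 1 <= ys i * netN alpha v W (xs i)) ->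
  lossS alpha v xs ys W = 0.
Proof.
move=> h; rewrite /lossS big1 ?mulr0 // => i _.
by apply: max_r; rewrite subr_le0.
Qed.

Lemma lossS_pos (W : 'M[R]_(k + k, d)) i0 : ys i0 * netN alpha v W (xs i0) < 1 ->
  0 < lossS alpha v xs ys W.
Proof.
move=> h; rewrite /lossS mulr_gt0 //.
  by rewrite invr_gt0 ltr0n; case: n i0 {h} => [[]|].
rewrite (bigD1 i0) //= ltr_pwDl //.
  by rewrite lt_max subr_gt0 h.
by rewrite sumr_ge0 // => i _; rewrite le_max lexx orbT.
Qed.

Lemma dotpZ (c : R) (u x : 'rV[R]_d) : dotp (c *: u) x = c * dotp u x.
Proof. by rewrite /dotp mulr_sumr; apply: eq_bigr => l _; rewrite mxE mulrA. Qed.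

End L.

Theorem proposition1 (R : realFieldType) (d k n : nat) (alpha v : R)
    (xs : 'I_n -> 'rV[R]_d) (ys : 'I_n -> R) :
  (1 <= d)%N -> (1 <= k)%N -> (1 <= n)%N ->
  0 < alpha -> alpha < 1 -> 0 < v ->
  (forall i : 'I_n, \sum_(l < d) (xs i 0 l) ^+ 2 <= 1) ->
  (forall i : 'I_n, ys i = 1 \/ ys i = -1) ->
  (exists wstar : 'rV[R]_d, forall i : 'I_n, 1 <= ys i * dotp wstar (xs i)) ->
  (forall W : 'M[R]_(k + k, d),
     critical_point alpha v xs ys W -> global_min (lossS alpha v xs ys) W)
  /\ ~ convex_fun (@lossS R k d n alpha v xs ys).
Proof.
move=> hd hk hn a0 a1 v0 _ hy [w hw]; split.
- move=> W hc W'; rewrite /global_min; suff -> : lossS alpha v xs ys W = 0 by apply: lossS_ge0.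
  have hG : \sum_(i < n) grad_example alpha v (xs i) (ys i) W = 0.
    move: hc; rewrite /critical_point /gradS => /eqP; rewrite scaler_eq0.
    case/orP => /eqP // h; exfalso; move: h; apply/eqP.
    by rewrite invr_neq0 // pnatr_eq0 -lt0n.
  have h0 : (0 < k + k)%N by lia.
  pose j0 := Ordinal h0.
  pose T i := \sum_(l < d) w 0 l * grad_example alpha v (xs i) (ys i) W j0 l.
  have hT : \sum_(i < n) T i = 0.
    rewrite /T exchange_big /= big1 // => l _.
    rewrite -mulr_sumr /= -summxE hG mxE; exact: mulr0.
  have hTE i : T i = if ys i * netN alpha v W (xs i) < 1 then
      - (v * leaky' alpha (dotp (row j0 W) (xs i)) * (ys i * dotp w (xs i))) else 0.
    rewrite /T /grad_example; case: ifP => _.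
      rewrite /dotp !mulr_sumr -sumrN; apply: eq_bigr => l _.
      by rewrite mxE /vvec /= hk; ring.
    by rewrite big1 // => l _; rewrite mxE mulr0.
  have hTle i : 0 <= - T i.
    rewrite hTE; case: ifP => _; last by rewrite oppr0.
    rewrite opprK; apply: mulr_ge0; last by apply: le_trans (hw i).
    apply: mulr_ge0; first exact: ltW.
    by rewrite /leaky'; case: ifP => _; lra.
  apply: lossS_zero => i.
  have hT0 : \sum_(i < n) - T i = 0 by rewrite sumrN hT oppr0.
  have := psumr_eq0P (fun i _ => hTle i) hT0 (erefl true : xpredT i).
  rewrite hTE; case: ifP => hact; last by move=> _; rewrite leNgt hact.
  move/eqP; rewrite opprK mulf_eq0 mulf_eq0 (gt_eqF v0) /=.
  have : 0 < ys i * dotp w (xs i) by have := hw i; lra.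
  move/gt_eqF => ->; rewrite orbF /leaky'; case: ifP => _ /eqP; lra.
- move=> conv.
  have [b hb] : exists b : 'I_n -> R, forall i, b i = ys i * dotp w (xs i).
    by exists (fun i => ys i * dotp w (xs i)).
  have [i0 hi0] := exists_min b hn.
  have [m hm] : exists m : R, m = b i0 by exists (b i0).
  rewrite -hm in hi0.
  have m1 : 1 <= m by rewrite hm hb; apply: hw.
  have anz : alpha != 0 by rewrite gt_eqF.
  have vnz : v != 0 by rewrite gt_eqF.
  have mnz : m != 0 by rewrite gt_eqF //; lra.
  have [u hu] : exists u : 'rV[R]_d, u = (alpha * v * m)^-1 *: w by eexists.
  have bpos i : 0 < b i by rewrite hb; have := hw i; lra.
  have key i s t : ys i * netN alpha v (Wst k s t u) (xs i) = (b i / (alpha * m)) * hh alpha (ys i) s t.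
    rewrite netN_Wst // hu dotpZ.
    have hdot : dotp w (xs i) = ys i * b i by rewrite hb; case: (hy i) => ->; ring.
    have hc : 0 < b i / (alpha * v * m).
      by rewrite divr_gt0 //; apply: mulr_gt0; [exact: mulr_gt0 | lra].
    rewrite hdot.
    have -> : s * ((alpha * v * m)^-1 * (ys i * b i)) = (s * ys i) * (b i / (alpha * v * m)) by ring.
    have -> : t * ((alpha * v * m)^-1 * (ys i * b i)) = (t * ys i) * (b i / (alpha * v * m)) by ring.
    rewrite (leakyZ (s * ys i)) ?(leakyZ (t * ys i)) //; try lra.
    by rewrite /hh; field; nz.
  have good s t : (forall y, y = 1 \/ y = -1 -> alpha <= hh alpha y s t) ->
      lossS alpha v xs ys (Wst k s t u) = 0.
    move=> h; apply: lossS_zero => i; rewrite key.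
    have hbi : m <= b i := hi0 i.
    have h2 : alpha <= hh alpha (ys i) s t := h _ (hy i).
    have hr : 1 <= b i / m by rewrite ler_pdivlMr ?mul1r //; lra.
    have hpos : 0 <= b i / (alpha * m).
      by apply/ltW; rewrite divr_gt0 //; apply: mulr_gt0 => //; lra.
    apply: (@le_trans _ _ (b i / (alpha * m) * alpha)); last by apply: ler_pM => //; lra.
    have -> : b i / (alpha * m) * alpha = b i / m by field; nz.
    exact: hr.
  have bad s t : hh alpha (ys i0) s t < alpha -> 0 < lossS alpha v xs ys (Wst k s t u).
    move=> h; apply: (lossS_pos (i0 := i0)); rewrite key.
    have -> : b i0 / (alpha * m) = alpha^-1 by rewrite -hm; field; nz.
    by rewrite mulrC ltr_pdivrMr // mul1r.
  have contra s1 t1 s2 t2 : (forall y, y = 1 \/ y = -1 -> alpha <= hh alpha y s1 t1) ->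
      (forall y, y = 1 \/ y = -1 -> alpha <= hh alpha y s2 t2) ->
      hh alpha (ys i0) (1/2 * s1 + (1 - 1/2) * s2) (1/2 * t1 + (1 - 1/2) * t2) < alpha -> False.
    move=> h1 h2 h3.
    have := conv (Wst k s1 t1 u) (Wst k s2 t2 u) (1/2).
    rewrite Wst_comb (good _ _ h1) (good _ _ h2) !mulr0 addr0.
    have := bad _ _ h3; move=> hbad hc.
    have : lossS alpha v xs ys (Wst k (1 / 2 * s1 + (1 - 1 / 2) * s2) (1 / 2 * t1 + (1 - 1 / 2) * t2) u) <= 0 by apply: hc; lra.
    lra.
  have aa2 : alpha * alpha < alpha by nra.
  case: (hy i0) => hyi0.
  + apply: (contra (- alpha / 2) (- 1 - alpha / 2) (alpha * alpha / 2) (- 1 + alpha / 2)).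
    * by move=> y [] ->; [apply: P11 | apply: P12].
    * by move=> y [] ->; [apply: P21 | apply: P22].
    * by rewrite hyi0; apply: Pmid1.
  + apply: (contra (- (- 1 - alpha / 2)) (- (- alpha / 2)) (- (- 1 + alpha / 2)) (- (alpha * alpha / 2))).
    * by move=> y [] ->; rewrite -hh_mirror !opprK; [apply: P12 | apply: P11].
    * by move=> y [] ->; rewrite -hh_mirror !opprK; [apply: P22 | apply: P21].
    * by rewrite hyi0; apply: Pmid2.
Qed.
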